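(* If $n=p^s$ with $p$ prime and $s\ge 1$ an integer, then the $n\times n$ square has no perfect Mondrian partition.
   Context: A Mondrian partition of an $n\times n$ square ($n$ a positive integer) is a dissection of the square into $k\ge 2$ non-overlapping rectangles with positive integer side lengths which are pairwise non-congruent (rectangles of dimensions $a\times b$ and $b\times a$ count as congruent). It is perfect if all its rectangles have the same area. *)

(* Defs.v *)
From mathcomp Require Import all_boot.
Set Implicit Arguments. Unset Strict Implicit. Unset Printing Implicit Defensive.

(* An axis-parallel rectangle placed in the plane: lower-left corner
   (rx, ry), width rw and height rh.  Corners lie on the integer grid. *)
Record rect := Rect { rx : nat; ry : nat; rw : nat; rh : nat }.

(* The unit cell [i,i+1] x [j,j+1] lies in the rectangle r. *)
Definition cell_in (r : rect) (i j : nat) : bool :=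
  (rx r <= i < rx r + rw r) && (ry r <= j < ry r + rh r).

Definition area (r : rect) : nat := rw r * rh r.

Definition congruent (r1 r2 : rect) : Prop :=
  (rw r1 = rw r2 /\ rh r1 = rh r2) \/ (rw r1 = rh r2 /\ rh r1 = rw r2).

(* R : 'I_k -> rect is a Mondrian partition of the n x n square
   [0,n] x [0,n]: k >= 2 rectangles with positive integer sides, contained
   in the square, non-overlapping and covering it (every unit cell of the
   square lies in exactly one rectangle), pairwise non-congruent. *)
Definition mondrian_partition (n k : nat) (R : 'I_k -> rect) : Prop :=
  [/\ 2 <= k,
      (forall t, 0 < rw (R t) /\ 0 < rh (R t)),
      (forall t, rx (R t) + rw (R t) <= n /\ ry (R t) + rh (R t) <= n),
      (forall i j, i < n -> j < n -> exists! t, cell_in (R t) i j)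
    & (forall t1 t2, t1 <> t2 -> ~ congruent (R t1) (R t2))].

Definition perfect_mondrian_partition (n k : nat) (R : 'I_k -> rect) : Prop :=
  mondrian_partition n R /\ (forall t1 t2, area (R t1) = area (R t2)).

(* Main.v *)
Require Import Defs.
From mathcomp Require Import all_boot.
From mathcomp Require Import zify.

Lemma count_int (n a w : nat) :
  \sum_(i < n) ((a <= i) && (i < a + w) : nat) = minn n (a + w) - minn n a.
Proof.
elim: n => [|n IH]; first by rewrite big_ord0; lia.
rewrite big_ord_recr /= IH.
case: (leqP a n) => H1; case: (ltnP n (a + w)) => H2 /=; lia.
Qed.

Lemma area_sum (n k : nat) (R : 'I_k -> rect) :
  (forall t, rx (R t) + rw (R t) <= n /\ ry (R t) + rh (R t) <= n) ->
  (forall i j, i < n -> j < n -> exists! t, cell_in (R t) i j) ->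
  \sum_(t < k) area (R t) = n * n.
Proof.
move=> Hin Hcov.
have E1 : forall t : 'I_k, area (R t) =
   \sum_(i < n) \sum_(j < n) (cell_in (R t) i j : nat).
  move=> t; rewrite /area /cell_in.
  under eq_bigr => i _ do under eq_bigr => j _ do rewrite -mulnb.
  under eq_bigr => i _ do rewrite -big_distrr /=.
  rewrite -big_distrl /= !count_int.
  have [h1 h2] := Hin t; congr (_ * _); lia.
under eq_bigr => t _ do rewrite E1.
rewrite exchange_big /=.
under eq_bigr => i _ do rewrite exchange_big /=.
have E2 : forall i j : 'I_n, \sum_(t < k) (cell_in (R t) i j : nat) = 1.
  move=> i j; have [t0 [Ht0 Hu]] := Hcov i j (ltn_ord i) (ltn_ord j).
  rewrite (bigD1 t0) //= Ht0 big1 // => t Ht.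
  case E: (cell_in (R t) i j) => //.
  by move/eqP: Ht; case; apply: esym; apply: Hu.
under eq_bigr => i _ do under eq_bigr => j _ do rewrite E2.
under eq_bigr => i _ do rewrite sum_nat_const card_ord.
by rewrite sum_nat_const card_ord muln1.
Qed.

Theorem mainTheorem7 (p s : nat) :
  prime p -> 1 <= s ->
  ~ (exists (k : nat) (R : 'I_k -> rect), perfect_mondrian_partition (p ^ s) R).
Proof.
move=> pp s1 [k [R [[k2 Hpos Hin Hcov Hnc] Harea]]].
have p1 : 1 < p by apply: prime_gt1.
have p0 : 0 < p by apply: prime_gt0.
have k0 : 0 < k by lia.
set t0 : 'I_k := Ordinal k0.
set A := area (R t0).
have HS := @area_sum _ _ R Hin Hcov.
have HkA : k * A = p ^ (2 * s).
  rewrite mul2n -addnn expnD -HS.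
  rewrite -{1}(card_ord k) -sum_nat_const; apply: eq_bigr => t _.
  exact: Harea.
have : A %| p ^ (2 * s) by rewrite -HkA dvdn_mull.
case/(dvdn_pfactor _ _ pp) => tt Htt HA.
set m := 2 * s - tt.
have pe : forall x, 0 < p ^ x by move=> x; rewrite expn_gt0 p0.
have Hk : k = p ^ m.
  apply/eqP; rewrite -(eqn_pmul2r (pe tt)) -HA HkA HA -expnD.
  by rewrite /m subnK.
pose e t := logn p (rw (R t)).
have eP : forall t, [/\ rw (R t) = p ^ e t, rh (R t) = p ^ (tt - e t),
     e t <= s & tt - e t <= s /\ e t <= tt].
  move=> t.
  have Ha : rw (R t) * rh (R t) = p ^ tt by rewrite -HA; exact: Harea.
  have : rw (R t) %| p ^ tt by rewrite -Ha dvdn_mulr.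
  case/(dvdn_pfactor _ _ pp) => e' He Hw.
  have -> : e t = e' by rewrite /e Hw pfactorK.
  have Hh : rh (R t) = p ^ (tt - e').
    apply/eqP; rewrite -(eqn_pmul2l (pe e')) -Hw Ha Hw -expnD subnKC //.
  have [h1 h2] := Hin t.
  split => //.
    by rewrite -(leq_exp2l _ _ p1) -Hw; lia.
  split => //; by rewrite -(leq_exp2l _ _ p1) -Hh; lia.
pose j t := minn (e t) (tt - e t) - (tt - s).
have jb : forall t, j t < m./2.+1.
  move=> t; have [_ _ h1 [h2 h3]] := eP t; rewrite /j /m; lia.
pose f t := Ordinal (jb t).
have finj : injective f.
  move=> t1 t2 /(congr1 val) /= Hj.
  case: (eqVneq t1 t2) => // /eqP Hne; exfalso; apply: (Hnc _ _ Hne).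
  have [w1 h1 a1 [b1 c1]] := eP t1; have [w2 h2 a2 [b2 c2]] := eP t2.
  rewrite /congruent w1 h1 w2 h2.
  move: Hj; rewrite /j => Hj.
  have : (e t1 = e t2) \/ (e t1 = tt - e t2) by lia.
  case=> H; [left | right]; rewrite H; split => //; congr (_ ^ _); lia.
have := leq_card f finj; rewrite !card_ord Hk => Hc.
have H := ltn_expl m p1; move: k2; rewrite Hk => k2.
move: Hc H k2; generalize (p ^ m) => X. clear -m. clearbody m. move: m X. lia.
Qed.
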